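(* For every pair of reals $\mu>\lambda\ge 0$ there exists a finite game $G$ (with two agents) and a welfare maximizer $a^*$ with $W(a^* )>0$ such that $G$ is $(\lambda,\mu)$-smooth, $G$ has a unique sink equilibrium (for the best-response process), and $\mathrm{PoS}(G)=0$.
   Context: A finite game $G$ consists of agents $N=\{1,\dots,n\}$, finite nonempty action sets $\mathcal A_i$, joint action set $\mathcal A=\mathcal A_1\times\cdots\times\mathcal A_n$, a welfare function $W:\mathcal A\to\mathbb R_{\ge 0}$ and utility functions $U_i:\mathcal A\to\mathbb R$, $i\in N$. For $a\in\mathcal A$, $a_{-i}$ denotes the actions of all agents other than $i$, and $(b_i,a_{-i})$ is the joint action obtained from $a$ by replacing $a_i$ with $b_i$. Fix $a^*\in\arg\max_{a\in\mathcal A}W(a)$. For $\mu\ge\lambda\ge0$, $G$ is $(\lambda,\mu)$-smooth if $\sum_{i=1}^n\big(U_i(a)-U_i(a^*_i,a_{-i})\big)\le\mu W(a)-\lambda W(a^* )$ for all $a\in\mathcal A$. The best response set of agent $i$ at $a$ is $\mathrm{BR}_i(a)=\arg\max_{b_i\in\mathcal A_i}U_i(b_i,a_{-i})$. The best-response process is the Markov chain on $\mathcal A$ in which, from state $a$, an agent $i$ is chosen uniformly at random from $N$, then $b_i$ is chosen uniformly at random from $\mathrm{BR}_i(a)$, and the next state is $(b_i,a_{-i})$. A sink strongly connected component is a nonempty set $S\subseteq\mathcal A$ such that for all $a,\bar a\in S$ there is a positive-probability path of the chain from $a$ to $\bar a$, and no state outside $S$ is reachable with positive probability from a state of $S$.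 A sink equilibrium is a stationary distribution $\sigma$ of the chain whose support equals a sink strongly connected component; $\mathrm{SE}$ is the set of sink equilibria, and $\mathrm{PoS}(G)=\min_{\sigma\in\mathrm{SE}}\mathbb E_{a\sim\sigma}[W(a)]/W(a^* )$. *)

(* Defs.v *)
From HB Require Import structures.
From mathcomp Require Import all_boot all_order all_algebra.
From mathcomp Require Import reals.
Set Implicit Arguments. Unset Strict Implicit. Unset Printing Implicit Defensive.
Import Order.TTheory GRing.Theory Num.Theory.
Local Open Scope ring_scope.

Section Game.
Variable R : realType.
Variable n : nat.
Variable A : 'I_n -> finType.
Local Notation jT := {dffun forall i : 'I_n, A i}.
Variable W : jT -> R.
Variable U : 'I_n -> jT -> R.

Definition upd (a : jT) (i : 'I_n) (c : jT) : jT :=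
  [ffun j => if j == i then c j else a j].

Definition welfare_max (astar : jT) : Prop := forall a, W a <= W astar.

Definition smooth (lambda mu : R) (astar : jT) : Prop :=
  mu >= lambda /\ lambda >= 0 /\
  forall a : jT,
    \sum_(i < n) (U i a - U i (upd a i astar)) <= mu * W a - lambda * W astar.

(* the joint actions (b_i, a_{-i}) with b_i in BR_i(a); this set is in
   bijection with BR_i(a) via b |-> b i *)
Definition BRset (i : 'I_n) (a : jT) : {set jT} :=
  [set b : jT | [forall j, (j != i) ==> (b j == a j)] &&
                [forall c : jT, U i (upd a i c) <= U i b]].

Definition trans (a b : jT) : R :=
  \sum_(i < n) (n%:R)^-1 * (if b \in BRset i a then (#|BRset i a|%:R)^-1 else 0).

Definition reach (a b : jT) : bool := connect [rel x y | 0 < trans x y] a b.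

Definition sink_scc (S : {set jT}) : Prop :=
  S != set0 /\
  (forall a b, a \in S -> b \in S -> reach a b) /\
  (forall a b, a \in S -> reach a b -> b \in S).

Definition stationary (sigma : jT -> R) : Prop :=
  (forall a, 0 <= sigma a) /\ \sum_(a : jT) sigma a = 1 /\
  (forall b, \sum_(a : jT) sigma a * trans a b = sigma b).

Definition support (sigma : jT -> R) : {set jT} := [set a | sigma a != 0].

Definition sink_eq (sigma : jT -> R) : Prop :=
  stationary sigma /\ sink_scc (support sigma).

Definition expW (sigma : jT -> R) : R := \sum_(a : jT) sigma a * W a.

Definition PoS_eq (astar : jT) (p : R) : Prop :=
  (exists sigma, sink_eq sigma /\ expW sigma / W astar = p) /\
  (forall sigma, sink_eq sigma -> p <= expW sigma / W astar).

Definition unique_sink_eq : Prop :=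
  exists sigma, sink_eq sigma /\ forall tau, sink_eq tau -> tau = sigma.

Definition game_ok : Prop :=
  (forall i, (0 < #|A i|)%N) /\ (forall a, 0 <= W a).

End Game.

(* Main.v *)
Require Import Defs.
From HB Require Import structures.
From mathcomp Require Import all_boot all_order all_algebra.
From mathcomp Require Import reals.
From mathcomp Require Import ring lra.
From Stdlib Require Import FunctionalExtensionality.
Import Order.TTheory GRing.Theory Num.Theory.
Local Open Scope ring_scope.

Definition A3 : 'I_2 -> finType := fun _ => 'I_3.
Definition jT := {dffun forall i : 'I_2, A3 i}.
Definition mk (x y : 'I_3) : jT := [ffun i => if i == ord0 then x else y].
Definition i0 : 'I_3 := ord0.
Definition i1 : 'I_3 := @Ordinal 3 1 isT.
Definition i2 : 'I_3 := @Ordinal 3 2 isT.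
Definition X (a : jT) : 'I_3 := a ord0.
Definition Y (a : jT) : 'I_3 := a ord_max.
Definition v0 (x y : nat) : nat :=
  (if x == 0 then (if y == 0 then 0 else 3) else if y == 0 then 0 else if x == y then 4 else 0)%N.
Definition v1 (x y : nat) : nat :=
  (if y == 0 then (if x == 0 then 0 else 3) else if x == 0 then 0 else if x != y then 4 else 0)%N.
Definition u (i : 'I_2) (a : jT) : nat :=
  if i == ord0 then v0 (X a) (Y a) else v1 (X a) (Y a).
Definition inC (a : jT) : bool := (val (X a) != 0%N) && (val (Y a) != 0%N).
Definition Uf {R : realType} (c : R) (i : 'I_2) (a : jT) : R := c * (u i a)%:R.
Definition Wf {R : realType} (a : jT) : R := if inC a then 0 else 1.

Lemma ord2P (i : 'I_2) : i = ord0 \/ i = ord_max.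
Proof. case: i => [[|[|m]]] H; [left|right|by []]; exact/val_inj. Qed.

Lemma ord3P (x : 'I_3) : [\/ x = i0, x = i1 | x = i2].
Proof. case: x => [[|[|[|m]]]] H; [apply: Or31|apply: Or32|apply: Or33|by []]; exact/val_inj. Qed.

Lemma forall3 (P : pred 'I_3) : [forall x, P x] = [&& P i0, P i1 & P i2].
Proof.
apply/forallP/and3P => [H|[H0 H1 H2] x]; first by split; apply: H.
by case: (ord3P x) => ->.
Qed.

Lemma XE x y : X (mk x y) = x. Proof. by rewrite /X ffunE. Qed.
Lemma YE x y : Y (mk x y) = y. Proof. by rewrite /Y ffunE. Qed.

Lemma mkK a : mk (X a) (Y a) = a.
Proof.
apply/ffunP => i; rewrite ffunE; case: (ord2P i) => -> //.
Qed.

Lemma mk_eq x y x' y' : (mk x y == mk x' y') = (x == x') && (y == y').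
Proof.
apply/eqP/andP => [H|[/eqP-> /eqP->]] //.
by have := congr1 X H; have := congr1 Y H; rewrite !XE !YE => -> ->.
Qed.

Lemma upd0 a c : upd a ord0 c = mk (X c) (Y a).
Proof. apply/ffunP => i; rewrite !ffunE; by case: (ord2P i) => ->. Qed.
Lemma upd1 a c : upd a ord_max c = mk (X a) (Y c).
Proof. apply/ffunP => i; rewrite !ffunE; by case: (ord2P i) => ->. Qed.

Section BR.
Variables (R : realType) (c : R).
Hypothesis cpos : 0 < c.

Lemma BR0 a b : (b \in BRset (Uf c) ord0 a) =
  (Y b == Y a) && [forall x : 'I_3, (v0 x (Y a) <= v0 (X b) (Y a))%N].
Proof.
rewrite inE; apply/andP/andP => [[/forallP H1 /forallP H2]|[/eqP H1 /forallP H2]].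
- have Hy : Y b == Y a by exact: (implyP (H1 ord_max) isT).
  split => //; apply/forallP => x; have := H2 (mk x (Y a)).
  by rewrite /Uf ler_pM2l // ler_nat upd0 /u /= !XE !YE (eqP Hy); apply.
- split; first by apply/forallP => j; case: (ord2P j) => -> //=; rewrite -/(Y b) -/(Y a) H1.
  apply/forallP => cc; rewrite upd0 /Uf ler_pM2l // ler_nat /u /= !XE !YE H1; exact: H2.
Qed.

Lemma BR1 a b : (b \in BRset (Uf c) ord_max a) =
  (X b == X a) && [forall y : 'I_3, (v1 (X a) y <= v1 (X a) (Y b))%N].
Proof.
rewrite inE; apply/andP/andP => [[/forallP H1 /forallP H2]|[/eqP H1 /forallP H2]].
- have Hx : X b == X a by exact: (implyP (H1 ord0) isT).
  split => //; apply/forallP => y; have := H2 (mk (X a) y).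
  by rewrite /Uf ler_pM2l // ler_nat upd1 /u /= !XE !YE (eqP Hx); apply.
- split; first by apply/forallP => j; case: (ord2P j) => -> //=; rewrite -/(X b) -/(X a) H1.
  apply/forallP => cc; rewrite upd1 /Uf ler_pM2l // ler_nat /u /= !XE !YE H1; exact: H2.
Qed.

End BR.

Definition c11 := mk i1 i1.
Definition c12 := mk i1 i2.
Definition c22 := mk i2 i2.
Definition c21 := mk i2 i1.

Section Dyn.
Variables (R : realType) (c : R).
Hypothesis cpos : 0 < c.

Lemma lift00 : lift ord0 (ord0 : 'I_1) = ord_max :> 'I_2.
Proof. exact/val_inj. Qed.

Lemma transE a b : trans (Uf c) a b =
  2^-1 * (if b \in BRset (Uf c) ord0 a then (#|BRset (Uf c) ord0 a|%:R)^-1 else 0) +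
  2^-1 * (if b \in BRset (Uf c) ord_max a then (#|BRset (Uf c) ord_max a|%:R)^-1 else 0).
Proof. by rewrite /trans big_ord_recl big_ord_recl big_ord0 addr0 lift00. Qed.

Lemma term_ge0 (S : {set jT}) b :
  0 <= 2^-1 * (if b \in S then (#|S|%:R)^-1 else 0 : R).
Proof. case: ifP => _; last by rewrite mulr0. by apply: mulr_ge0; rewrite invr_ge0 ler0n. Qed.

Lemma term_gt0 (S : {set jT}) b : b \in S ->
  0 < 2^-1 * (if b \in S then (#|S|%:R)^-1 else 0 : R).
Proof.
move=> Hb; rewrite Hb; apply: mulr_gt0; rewrite invr_gt0 ltr0n //.
by apply/card_gt0P; exists b.
Qed.

Lemma term_pos (S : {set jT}) b :
  (0 < 2^-1 * (if b \in S then (#|S|%:R)^-1 else 0 : R)) = (b \in S).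
Proof.
case Hb: (b \in S); last by rewrite mulr0 ltxx.
by apply: mulr_gt0; rewrite invr_gt0 ltr0n //; apply/card_gt0P; exists b.
Qed.

Lemma addr_gt0_split (x y : R) : 0 <= x -> 0 <= y -> (0 < x + y) = (0 < x) || (0 < y).
Proof.
move=> hx hy; rewrite !lt0r paddr_eq0 // negb_and addr_ge0 // hx hy !andbT //.
Qed.

Lemma Epos a b : (0 < trans (Uf c) a b) =
  (b \in BRset (Uf c) ord0 a) || (b \in BRset (Uf c) ord_max a).
Proof.
by rewrite transE addr_gt0_split ?term_ge0 // !term_pos.
Qed.

Lemma setE1 (S : {set jT}) t : (forall x y, (mk x y \in S) = (mk x y == t)) -> S = [set t].
Proof. move=> H; apply/setP => b; rewrite inE -[b]mkK; exact: H. Qed.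

Ltac brs := apply: setE1; let x := fresh "x" in let y := fresh "y" in intros x y;
  rewrite ?BR0 ?BR1 // mk_eq !XE !YE forall3;
  case: (ord3P x) => ->; case: (ord3P y) => ->.

Lemma BR_c11_0 : BRset (Uf c) ord0 c11 = [set c11].
Proof. brs. all: by []. Qed.
Lemma BR_c11_1 : BRset (Uf c) ord_max c11 = [set c12].
Proof. brs. all: by []. Qed.
Lemma BR_c12_0 : BRset (Uf c) ord0 c12 = [set c22].
Proof. brs. all: by []. Qed.
Lemma BR_c12_1 : BRset (Uf c) ord_max c12 = [set c12].
Proof. brs. all: by []. Qed.
Lemma BR_c22_0 : BRset (Uf c) ord0 c22 = [set c22].
Proof. brs. all: by []. Qed.
Lemma BR_c22_1 : BRset (Uf c) ord_max c22 = [set c21].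
Proof. brs. all: by []. Qed.
Lemma BR_c21_0 : BRset (Uf c) ord0 c21 = [set c11].
Proof. brs. all: by []. Qed.
Lemma BR_c21_1 : BRset (Uf c) ord_max c21 = [set c21].
Proof. brs. all: by []. Qed.

Lemma transS s p q b : BRset (Uf c) ord0 s = [set p] -> BRset (Uf c) ord_max s = [set q] ->
  trans (Uf c) s b = (if b == p then 2^-1 else 0) + (if b == q then 2^-1 else 0).
Proof.
move=> H0 H1; rewrite transE H0 H1 !cards1 !inE.
by case: (b == p); case: (b == q); rewrite ?mulr0 ?invr1 ?mulr1.
Qed.

Lemma inC_mk x y : inC (mk x y) = (val x != 0%N) && (val y != 0%N).
Proof. by rewrite /inC XE YE. Qed.

Definition E := [rel x y | 0 < trans (Uf c) x y].

Lemma closE a b : inC a -> E a b -> inC b.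
Proof.
rewrite /= Epos -(mkK a) inC_mk.
case: (ord3P (X a)) => ->; case: (ord3P (Y a)) => -> //= _;
  rewrite -/c11 -/c12 -/c22 -/c21.
- by rewrite BR_c11_0 BR_c11_1 !inE => /orP[/eqP->|/eqP->]; rewrite inC_mk.
- by rewrite BR_c12_0 BR_c12_1 !inE => /orP[/eqP->|/eqP->]; rewrite inC_mk.
- by rewrite BR_c21_0 BR_c21_1 !inE => /orP[/eqP->|/eqP->]; rewrite inC_mk.
- by rewrite BR_c22_0 BR_c22_1 !inE => /orP[/eqP->|/eqP->]; rewrite inC_mk.
Qed.

Lemma closC a b : inC a -> connect E a b -> inC b.
Proof.
move=> Ha /connectP[p pth ->]; elim: p a Ha pth => //= x p IH a Ha /andP[eax pth].
exact: (IH x (@closE a x Ha eax) pth).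
Qed.

Lemma stepE a b : (b \in BRset (Uf c) ord0 a) || (b \in BRset (Uf c) ord_max a) -> connect E a b.
Proof. by move=> H; apply: connect1; rewrite /= Epos. Qed.

Lemma st0 s p q : BRset (Uf c) ord0 s = [set p] -> BRset (Uf c) ord_max s = [set q] -> connect E s p.
Proof. by move=> H0 H1; apply: stepE; rewrite H0 inE eqxx. Qed.
Lemma st1 s p q : BRset (Uf c) ord0 s = [set p] -> BRset (Uf c) ord_max s = [set q] -> connect E s q.
Proof. by move=> H0 H1; apply: stepE; rewrite H1 inE eqxx orbT. Qed.

Lemma e11_12 : connect E c11 c12. Proof. exact: st1 BR_c11_0 BR_c11_1. Qed.
Lemma e12_22 : connect E c12 c22. Proof. exact: st0 BR_c12_0 BR_c12_1. Qed.
Lemma e22_21 : connect E c22 c21. Proof. exact: st1 BR_c22_0 BR_c22_1. Qed.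
Lemma e21_11 : connect E c21 c11. Proof. exact: st0 BR_c21_0 BR_c21_1. Qed.

Lemma from11 b : inC b -> connect E c11 b.
Proof.
rewrite -(mkK b) inC_mk.
case: (ord3P (X b)) => ->; case: (ord3P (Y b)) => -> //= _;
  rewrite -/c11 -/c12 -/c22 -/c21.
- exact: e11_12.
- exact: connect_trans e11_12 (connect_trans e12_22 e22_21).
- exact: connect_trans e11_12 e12_22.
Qed.

Lemma to11 a : connect E a c11.
Proof.
have h21 : connect E c21 c11 := e21_11.
have h22 : connect E c22 c11 := connect_trans e22_21 h21.
have h12 : connect E c12 c11 := connect_trans e12_22 h22.
have h10 : connect E (mk i1 i0) c11.
  apply: connect_trans h12; apply: stepE; rewrite /c11 /c12 /c22 /c21 BR0 // BR1 // !XE !YE !forall3; by [].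
rewrite -(mkK a); case: (ord3P (X a)) => ->; case: (ord3P (Y a)) => ->;
  rewrite -/c11 -/c12 -/c22 -/c21;
  try first [exact h10 | exact h12 | exact h21 | exact h22 | exact: connect0].
- apply: connect_trans h10; apply: stepE; rewrite /c11 /c12 /c22 /c21 BR0 // BR1 // !XE !YE !forall3; by [].
- apply: stepE; rewrite /c11 /c12 /c22 /c21 BR0 // BR1 // !XE !YE !forall3; by [].
- apply: connect_trans h22; apply: stepE; rewrite /c11 /c12 /c22 /c21 BR0 // BR1 // !XE !YE !forall3; by [].
- apply: connect_trans h21; apply: stepE; rewrite /c11 /c12 /c22 /c21 BR0 // BR1 // !XE !YE !forall3; by [].
Qed.

End Dyn.

Lemma sum3 (R : realType) (F : 'I_3 -> R) : \sum_(x : 'I_3) F x = F i0 + F i1 + F i2.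
Proof.
rewrite !big_ord_recl big_ord0 addr0 addrA.
by congr (_ + F _ + F _); apply/val_inj.
Qed.

Lemma sumC (R : realType) (f : jT -> R) : (forall a, ~~ inC a -> f a = 0) ->
  \sum_(a : jT) f a = f c11 + f c12 + f c22 + f c21.
Proof.
move=> H.
rewrite (reindex (fun p : 'I_3 * 'I_3 => mk p.1 p.2)) /=; last first.
  exists (fun a => (X a, Y a)) => [[x y] _|a _] /=; first by rewrite XE YE.
  exact: mkK.
rewrite -(pair_big xpredT xpredT (fun x y => f (mk x y))) /=.
rewrite sum3 !sum3.
rewrite (H (mk i0 i0)) ?inC_mk // (H (mk i0 i1)) ?inC_mk // (H (mk i0 i2)) ?inC_mk //.
rewrite (H (mk i1 i0)) ?inC_mk // (H (mk i2 i0)) ?inC_mk //.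
rewrite /c11 /c12 /c22 /c21. lra.
Qed.

Definition sigmaf {R : realType} (a : jT) : R := if inC a then 4^-1 else 0.
Definition astar : jT := mk i0 i0.

Section Main.
Variables (R : realType) (c : R).
Hypothesis cpos : 0 < c.

Lemma trans_c11 b : trans (Uf c) c11 b = (if b == c11 then 2^-1 else 0) + (if b == c12 then 2^-1 else 0).
Proof. by apply: transS => //; [exact: BR_c11_0 | exact: BR_c11_1]. Qed.
Lemma trans_c12 b : trans (Uf c) c12 b = (if b == c22 then 2^-1 else 0) + (if b == c12 then 2^-1 else 0).
Proof. by apply: transS => //; [exact: BR_c12_0 | exact: BR_c12_1]. Qed.
Lemma trans_c22 b : trans (Uf c) c22 b = (if b == c22 then 2^-1 else 0) + (if b == c21 then 2^-1 else 0).
Proof. by apply: transS => //; [exact: BR_c22_0 | exact: BR_c22_1]. Qed.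
Lemma trans_c21 b : trans (Uf c) c21 b = (if b == c11 then 2^-1 else 0) + (if b == c21 then 2^-1 else 0).
Proof. by apply: transS => //; [exact: BR_c21_0 | exact: BR_c21_1]. Qed.

Lemma stat_sum (tau : jT -> R) b : (forall a, ~~ inC a -> tau a = 0) ->
  \sum_(a : jT) tau a * trans (Uf c) a b =
  tau c11 * ((if b == c11 then 2^-1 else 0) + (if b == c12 then 2^-1 else 0)) +
  tau c12 * ((if b == c22 then 2^-1 else 0) + (if b == c12 then 2^-1 else 0)) +
  tau c22 * ((if b == c22 then 2^-1 else 0) + (if b == c21 then 2^-1 else 0)) +
  tau c21 * ((if b == c11 then 2^-1 else 0) + (if b == c21 then 2^-1 else 0)).
Proof.
move=> H; rewrite (@sumC R (fun a => tau a * trans (Uf c) a b)).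
  by rewrite trans_c11 trans_c12 trans_c22 trans_c21.
by move=> a Ha; rewrite H // mul0r.
Qed.

Lemma support_sub (tau : jT -> R) : sink_scc (Uf c) (Defs.support tau) ->
  forall a, ~~ inC a -> tau a = 0.
Proof.
move=> [/set0Pn[a0 Ha0] [Hsc Hcl]] a Ha.
have H11 : c11 \in Defs.support tau by apply: (Hcl a0) => //; exact: (@to11 R c cpos).
have : a \notin Defs.support tau.
  apply: contra Ha => Hs; apply: (@closC R c cpos c11); first by rewrite /c11 inC_mk.
  exact: Hsc.
by rewrite inE negbK => /eqP.
Qed.

Lemma tau_eq (tau : jT -> R) : sink_eq (Uf c) tau -> tau = sigmaf.
Proof.
move=> [[Hge [Hsum Hst]] Hscc].
have H0 := @support_sub tau Hscc.
have e11 := Hst c11; have e12 := Hst c12; have e22 := Hst c22; have e21 := Hst c21.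
rewrite !stat_sum // in e11 e12 e22 e21.
rewrite (@sumC R tau) // in Hsum.
rewrite /c11 /c12 /c22 /c21 !mk_eq /= in e11 e12 e22 e21 Hsum.
apply: functional_extensionality => a; rewrite /sigmaf; case: ifP => Ha; last exact: H0 (negbT Ha).
move: Ha; rewrite -(mkK a) inC_mk.
case: (ord3P (X a)) => ->; case: (ord3P (Y a)) => -> //= _; lra.
Qed.

Lemma supp_sig a : (a \in Defs.support (sigmaf : jT -> R)) = inC a.
Proof.
rewrite inE /sigmaf; case: ifP => _ //=; last by rewrite eqxx.
by rewrite invr_eq0 pnatr_eq0.
Qed.

Lemma sigma_sink : sink_eq (Uf c) (sigmaf : jT -> R).
Proof.
have Hz : forall a, ~~ inC a -> (sigmaf a : R) = 0 by move=> a Ha; rewrite /sigmaf (negbTE Ha).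
split; first split.
- by move=> a; rewrite /sigmaf; case: ifP => _; rewrite ?invr_ge0 ?ler0n.
split.
- rewrite (@sumC R sigmaf) // /sigmaf /c11 /c12 /c22 /c21 !inC_mk /=; lra.
- move=> b; rewrite stat_sum //.
  rewrite -(mkK b); case: (ord3P (X b)) => ->; case: (ord3P (Y b)) => ->;
  rewrite /sigmaf /c11 /c12 /c22 /c21 !inC_mk !mk_eq /=; lra.
split; first by apply/set0Pn; exists c11; rewrite supp_sig /c11 inC_mk.
split.
- move=> a b; rewrite !supp_sig => Ha Hb.
  exact: connect_trans (@to11 R c cpos a) (@from11 R c cpos b Hb).
- move=> a b; rewrite !supp_sig => Ha; exact: (@closC R c cpos a b).
Qed.

End Main.

Theorem proposition3 (R : realType) (lambda mu : R) :
  0 <= lambda -> lambda < mu ->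
  exists (A : 'I_2 -> finType)
         (W : {dffun forall i : 'I_2, A i} -> R)
         (U : 'I_2 -> {dffun forall i : 'I_2, A i} -> R)
         (astar : {dffun forall i : 'I_2, A i}),
    [/\ game_ok W, welfare_max W astar, 0 < W astar,
        smooth W U lambda mu astar &
        (unique_sink_eq U /\ PoS_eq W U astar 0)].
Proof.
move=> hl hlm.
have cpos : 0 < lambda + 1 by lra.
have Wa : (Wf astar : R) = 1 by rewrite /Wf /astar inC_mk.
exists A3, Wf, (Uf (lambda + 1)), astar; split.
- split => [i|a]; first by rewrite card_ord.
  by rewrite /Wf; case: ifP => _; lra.
- by move=> a; rewrite Wa /Wf; case: ifP => _; lra.
- by rewrite Wa; lra.
- split; first lra. split; first lra.
  move=> a; rewrite big_ord_recl big_ord_recl big_ord0 addr0 lift00 upd0 upd1 Wa.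
  rewrite -(mkK a) /astar !XE !YE; case: (ord3P (X a)) => ->; case: (ord3P (Y a)) => ->;
  rewrite /Uf /u /Wf !XE !YE !inC_mk /v0 /v1 /=; lra.
split.
- exists sigmaf; split; first exact: sigma_sink.
  by move=> tau Ht; exact: tau_eq Ht.
split.
- exists sigmaf; split; first exact: sigma_sink.
  rewrite Wa divr1 /expW (@sumC R (fun a => sigmaf a * Wf a)); last first.
    by move=> a Ha; rewrite /sigmaf (negbTE Ha) mul0r.
  rewrite /sigmaf /Wf /c11 /c12 /c22 /c21 !inC_mk /=; lra.
- move=> tau [[Hge _] _]; rewrite Wa divr1.
  apply: sumr_ge0 => a _; apply: mulr_ge0; first exact: Hge.
  by rewrite /Wf; case: ifP => _; lra.
Qed.
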